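(* Let $n_1,n_2$ be positive integers, $C=[c_{j_1,j_2}]\in\mathbb{R}^{n_1\times n_2}$, $\varepsilon>0$, and let $\mathbf{p}_1\in\mathbb{R}^{n_1}_{++}$, $\mathbf{p}_2\in\mathbb{R}^{n_2}_{++}$ satisfy $\mathbf{1}_{n_1}^\top\mathbf{p}_1=\mathbf{1}_{n_2}^\top\mathbf{p}_2$. For $(\mathbf{x},\mathbf{y})\in\mathbb{R}^{n_1}\times\mathbb{R}^{n_2}$ let $C(\mathbf{x},\mathbf{y})=C-\mathbf{x}\mathbf{1}_{n_2}^\top-\mathbf{1}_{n_1}\mathbf{y}^\top$, and set $\hat{\mathrm{D}}=\{(\mathbf{x},\mathbf{y})\in\mathbb{R}^{n_1}\times\mathbb{R}^{n_2}:\ C(\mathbf{x},\mathbf{y})>0 \text{ entrywise}\}$, $\mathrm{D}=\{(\mathbf{x},\mathbf{y})\in\hat{\mathrm{D}}:\ \mathbf{1}_{n_1}^\top\mathbf{x}-\mathbf{1}_{n_2}^\top\mathbf{y}=0\}$, $\beta_C(\mathbf{x},\mathbf{y})=-\sum_{j_1=1}^{n_1}\sum_{j_2=1}^{n_2}\log(c_{j_1,j_2}-x_{j_1}-y_{j_2})$ on $\hat{\mathrm{D}}$, and $$\varphi(\mathbf{x},\mathbf{y},C)=\mathbf{p}_1^\top\mathbf{x}+\mathbf{p}_2^\top\mathbf{y}-\varepsilon\beta_C(\mathbf{x},\mathbf{y})+n_1n_2\varepsilon(1-\log\varepsilon).$$ Then $\varphi$ is concave on $\hat{\mathrm{D}}$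 and strictly concave on $\mathrm{D}$, and $$\max_{(\mathbf{x},\mathbf{y})\in\hat{\mathrm{D}}}\varphi(\mathbf{x},\mathbf{y},C)=\max_{(\mathbf{x},\mathbf{y})\in\mathrm{D}}\varphi(\mathbf{x},\mathbf{y},C)=\tau_\beta(C,P,\varepsilon).$$ Moreover, $\varphi$ attains its maximum on $\hat{\mathrm{D}}$ exactly on the line $\mathrm{L}=\{(\mathbf{u}_1,\mathbf{u}_2)+t(\mathbf{1}_{n_1},-\mathbf{1}_{n_2}):t\in\mathbb{R}\}$, which intersects $\mathrm{D}$ at the unique point $(\mathbf{u}_1,\mathbf{u}_2)=((u_{j_1,1})_{j_1},(u_{j_2,2})_{j_2})$, and this point is the one for which the matrix $U=[u_{j_1,j_2}]$, $u_{j_1,j_2}=\frac{\varepsilon}{c_{j_1,j_2}-u_{j_1,1}-u_{j_2,2}}$, lies in $\mathrm{V}_o(P)$ and is the minimizer in the definition of $\tau_\beta(C,P,\varepsilon)$.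
   Context: $\mathbf{1}_n$ is the all-ones vector in $\mathbb{R}^n$; $\mathbb{R}^n_{++}$ is the set of entrywise positive vectors. For $P=(\mathbf{p}_1,\mathbf{p}_2)$, $\mathrm{V}(P)=\{V\in\mathbb{R}^{n_1\times n_2}_+:\ V\mathbf{1}_{n_2}=\mathbf{p}_1,\ V^\top\mathbf{1}_{n_1}=\mathbf{p}_2\}$ and $\mathrm{V}_o(P)$ is the set of entrywise positive matrices in $\mathrm{V}(P)$. For $V\in\mathbb{R}^{n_1\times n_2}_{++}$, $\beta(V)=-\sum_{j_1,j_2}\log v_{j_1,j_2}$, and $\tau_\beta(C,P,\varepsilon)=\min_{V\in\mathrm{V}_o(P)}\big(\operatorname{tr}C^\top V+\varepsilon\beta(V)\big)$. *)

(* Defs.v *)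
From HB Require Import structures.
From mathcomp Require Import all_boot all_order all_algebra.
From mathcomp Require Import reals exp.
Set Implicit Arguments. Unset Strict Implicit. Unset Printing Implicit Defensive.
Import Order.TTheory GRing.Theory Num.Theory.
Local Open Scope ring_scope.

Section Defs.
Variable R : realType.

Definition sumv (n : nat) (p : 'cV[R]_n) : R := \sum_(i < n) p i ord0.

Definition Vset (n1 n2 : nat) (p1 : 'cV[R]_n1) (p2 : 'cV[R]_n2)
  (V : 'M[R]_(n1, n2)) : Prop :=
  (forall i j, 0 <= V i j) /\
  V *m (const_mx 1 : 'cV[R]_n2) = p1 /\ V^T *m (const_mx 1 : 'cV[R]_n1) = p2.

Definition Voset (n1 n2 : nat) (p1 : 'cV[R]_n1) (p2 : 'cV[R]_n2)
  (V : 'M[R]_(n1, n2)) : Prop :=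
  Vset p1 p2 V /\ (forall i j, 0 < V i j).

Definition beta (n1 n2 : nat) (V : 'M[R]_(n1, n2)) : R :=
  - \sum_(i < n1) \sum_(j < n2) ln (V i j).

Definition tau_obj (n1 n2 : nat) (C : 'M[R]_(n1, n2)) (eps : R)
  (V : 'M[R]_(n1, n2)) : R := \tr (C^T *m V) + eps * beta V.

Definition Cxy (n1 n2 : nat) (C : 'M[R]_(n1, n2)) (x : 'cV[R]_n1)
  (y : 'cV[R]_n2) : 'M[R]_(n1, n2) :=
  C - x *m (const_mx 1 : 'rV[R]_n2) - (const_mx 1 : 'cV[R]_n1) *m y^T.

Definition Dhat (n1 n2 : nat) (C : 'M[R]_(n1, n2))
  (z : 'cV[R]_n1 * 'cV[R]_n2) : Prop :=
  forall i j, 0 < Cxy C z.1 z.2 i j.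

Definition Dset (n1 n2 : nat) (C : 'M[R]_(n1, n2))
  (z : 'cV[R]_n1 * 'cV[R]_n2) : Prop :=
  Dhat C z /\ sumv z.1 - sumv z.2 = 0.

Definition betaC (n1 n2 : nat) (C : 'M[R]_(n1, n2))
  (z : 'cV[R]_n1 * 'cV[R]_n2) : R :=
  - \sum_(i < n1) \sum_(j < n2) ln (C i j - z.1 i ord0 - z.2 j ord0).

Definition phi (n1 n2 : nat) (p1 : 'cV[R]_n1) (p2 : 'cV[R]_n2) (eps : R)
  (C : 'M[R]_(n1, n2)) (z : 'cV[R]_n1 * 'cV[R]_n2) : R :=
  \sum_(i < n1) p1 i ord0 * z.1 i ord0 + \sum_(j < n2) p2 j ord0 * z.2 j ord0
  - eps * betaC C z + (n1 * n2)%:R * eps * (1 - ln eps).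

Definition pcomb (n1 n2 : nat) (t : R) (z w : 'cV[R]_n1 * 'cV[R]_n2) :=
  (t *: z.1 + (1 - t) *: w.1, t *: z.2 + (1 - t) *: w.2).

Definition concave_on (n1 n2 : nat) (S : 'cV[R]_n1 * 'cV[R]_n2 -> Prop)
  (f : 'cV[R]_n1 * 'cV[R]_n2 -> R) : Prop :=
  forall z w, S z -> S w -> forall t, 0 <= t <= 1 ->
    t * f z + (1 - t) * f w <= f (pcomb t z w).

Definition strictly_concave_on (n1 n2 : nat) (S : 'cV[R]_n1 * 'cV[R]_n2 -> Prop)
  (f : 'cV[R]_n1 * 'cV[R]_n2 -> R) : Prop :=
  forall z w, S z -> S w -> z <> w -> forall t, 0 < t < 1 ->
    t * f z + (1 - t) * f w < f (pcomb t z w).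

Definition is_max (T : Type) (S : T -> Prop) (f : T -> R) (m : R) : Prop :=
  (exists2 z, S z & f z = m) /\ (forall z, S z -> f z <= m).

Definition is_min (T : Type) (S : T -> Prop) (f : T -> R) (m : R) : Prop :=
  (exists2 z, S z & f z = m) /\ (forall z, S z -> m <= f z).

Definition Umat (n1 n2 : nat) (C : 'M[R]_(n1, n2)) (eps : R)
  (z : 'cV[R]_n1 * 'cV[R]_n2) : 'M[R]_(n1, n2) :=
  \matrix_(i, j) (eps / (C i j - z.1 i ord0 - z.2 j ord0)).

Definition Lline (n1 n2 : nat) (u : 'cV[R]_n1 * 'cV[R]_n2)
  (z : 'cV[R]_n1 * 'cV[R]_n2) : Prop :=
  exists t : R, z = (u.1 + t *: const_mx 1, u.2 - t *: const_mx 1).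

End Defs.

(* Main.v *)
Require Import Defs.
From HB Require Import structures.
From mathcomp Require Import all_boot all_order all_algebra.
From mathcomp Require Import reals exp.
From mathcomp Require Import sequences.
From mathcomp Require Import all_classical all_reals all_analysis.
From mathcomp Require Import ring lra.
Import Order.TTheory GRing.Theory Num.Theory.
Import numFieldNormedType.Exports.
Local Open Scope ring_scope.
Set Implicit Arguments. Unset Strict Implicit. Unset Printing Implicit Defensive.

Section Alg.
Variable R : realType.

Lemma ln_le_sub1 (x : R) : 0 < x -> ln x <= x - 1.
Proof.
move=> x0; have := expR_ge1Dx (ln x); rewrite lnK ?posrE //; lra.
Qed.

Lemma ln_lt_sub1 (x : R) : 0 < x -> x != 1 -> ln x < x - 1.
Proof.
move=> x0 x1; have : ln x != 0 by rewrite ln_eq0.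
move/expR_gt1Dx; rewrite lnK ?posrE //; lra.
Qed.

Definition hh (eps s : R) := s - eps * ln s - eps + eps * ln eps.

Lemma hhE eps s : 0 < eps -> 0 < s -> hh eps s = eps * (s / eps - 1 - ln (s / eps)).
Proof.
move=> e0 s0; rewrite /hh ln_div ?posrE //.
rewrite !mulrBr mulrCA mulfV ?gt_eqF //; ring.
Qed.

Lemma hh_ge0 eps s : 0 < eps -> 0 < s -> 0 <= hh eps s.
Proof.
move=> e0 s0; rewrite hhE // mulr_ge0 //; first exact: ltW.
have := @ln_le_sub1 (s/eps) (divr_gt0 s0 e0). lra.
Qed.

Lemma hh_eq0 eps s : 0 < eps -> 0 < s -> hh eps s = 0 -> s = eps.
Proof.
move=> e0 s0; rewrite hhE // => /eqP; rewrite mulf_eq0 gt_eqF //= => /eqP H.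
have [se|ne] := eqVneq (s / eps) 1.
  exact: divr1_eq.
have := @ln_lt_sub1 (s/eps) (divr_gt0 s0 e0) ne; lra.
Qed.

End Alg.

Section Gap.
Variable R : realType.
Variables n1 n2 : nat.
Implicit Types (C : 'M[R]_(n1, n2)) (V : 'M[R]_(n1, n2)) (z : 'cV[R]_n1 * 'cV[R]_n2).

Definition dsum (F : 'I_n1 -> 'I_n2 -> R) := \sum_i \sum_j F i j.

Lemma dsumD F G : dsum (fun i j => F i j + G i j) = dsum F + dsum G.
Proof. by rewrite /dsum -big_split; apply: eq_bigr => i _; rewrite big_split. Qed.
Lemma dsumN F : dsum (fun i j => - F i j) = - dsum F.
Proof. by rewrite /dsum -sumrN; apply: eq_bigr => i _; rewrite sumrN. Qed.
Lemma dsumZ k F : dsum (fun i j => k * F i j) = k * dsum F.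
Proof. by rewrite /dsum mulr_sumr; apply: eq_bigr => i _; rewrite mulr_sumr. Qed.
Lemma dsum_cst k : dsum (fun _ _ => k) = (n1 * n2)%:R * k.
Proof.
rewrite /dsum; under eq_bigr do rewrite sumr_const card_ord.
by rewrite sumr_const card_ord -mulrnA mulr_natl mulnC.
Qed.

Definition aa C z i j := C i j - z.1 i ord0 - z.2 j ord0.

Lemma CxyE C (x : 'cV[R]_n1) (y : 'cV[R]_n2) i j :
  Cxy C x y i j = C i j - x i ord0 - y j ord0.
Proof.
rewrite /Cxy !mxE !big_ord1 !mxE mulr1 mul1r.
by rewrite (_ : ord0 = 0) //.
Qed.

Lemma DhatE C z : Dhat C z <-> forall i j, 0 < aa C z i j.
Proof. by rewrite /Dhat /aa; split=> H i j; move: (H i j); rewrite CxyE. Qed.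

Lemma rowsumE V (p1 : 'cV[R]_n1) : V *m const_mx 1 = p1 ->
  forall i, p1 i ord0 = \sum_j V i j.
Proof.
move=> <- i; rewrite mxE; apply: eq_bigr => j _; by rewrite mxE mulr1.
Qed.

Lemma colsumE V (p2 : 'cV[R]_n2) : V^T *m const_mx 1 = p2 ->
  forall j, p2 j ord0 = \sum_i V i j.
Proof.
move=> <- j; rewrite mxE; apply: eq_bigr => i _; by rewrite !mxE mulr1.
Qed.

Lemma traceE C V : \tr (C^T *m V) = dsum (fun i j => C i j * V i j).
Proof.
rewrite /mxtrace /dsum exchange_big; apply: eq_bigr => j _.
by rewrite mxE; apply: eq_bigr => i _; rewrite mxE.
Qed.

Lemma gap C eps p1 p2 V z : 0 < eps -> Vset p1 p2 V ->
  (forall i j, 0 < V i j) -> Dhat C z ->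
  tau_obj C eps V - phi p1 p2 eps C z = dsum (fun i j => hh eps (V i j * aa C z i j)).
Proof.
move=> e0 [_ [r c]] Vp /DhatE Dz.
have E : forall i j, hh eps (V i j * aa C z i j) =
  C i j * V i j + - (V i j * z.1 i ord0) + - (V i j * z.2 j ord0)
  + eps * - ln (V i j) + eps * - ln (aa C z i j) + - (eps * (1 - ln eps)).
  move=> i j; rewrite /hh lnM ?posrE // /aa; ring.
rewrite (_ : dsum _ = dsum (fun i j => C i j * V i j + - (V i j * z.1 i ord0) + - (V i j * z.2 j ord0)
  + eps * - ln (V i j) + eps * - ln (aa C z i j) + - (eps * (1 - ln eps)))); last first.
  by apply: eq_bigr => i _; apply: eq_bigr => j _; exact: E.
rewrite !dsumD !dsumN !dsumZ dsum_cst.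
rewrite /tau_obj /phi /beta /betaC traceE.
have -> : \sum_(i < n1) p1 i ord0 * z.1 i ord0 = dsum (fun i j => V i j * z.1 i ord0).
  by rewrite /dsum; apply: eq_bigr => i _; rewrite (rowsumE r) mulr_suml.
have -> : \sum_(j < n2) p2 j ord0 * z.2 j ord0 = dsum (fun i j => V i j * z.2 j ord0).
  by rewrite /dsum exchange_big; apply: eq_bigr => j _; rewrite (colsumE c) mulr_suml.
rewrite -/(dsum (fun i j => ln (V i j))).
rewrite -/(dsum (fun i j => ln (C i j - z.1 i ord0 - z.2 j ord0))).
rewrite !dsumN /aa. ring.
Qed.

End Gap.

Section Conc.
Variable R : realType.

Lemma ln_conc (a b t : R) : 0 < a -> 0 < b -> 0 <= t <= 1 ->
  t * ln a + (1 - t) * ln b <= ln (t * a + (1 - t) * b).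
Proof.
move=> a0 b0 /andP[t0 t1].
have m0 : 0 < t * a + (1 - t) * b.
  have [->|tp] := eqVneq t 0; first by rewrite mul0r add0r subr0 mul1r.
  have : 0 < t by rewrite lt_def tp.
  move=> tp'; apply: ltr_pwDl; first exact: mulr_gt0.
  by apply: mulr_ge0 => //; lra.
set m := t * a + (1 - t) * b in m0 *.
have ha := ln_le_sub1 (divr_gt0 a0 m0); have hb := ln_le_sub1 (divr_gt0 b0 m0).
rewrite !ln_div ?posrE // in ha hb.
have : t * (ln a - ln m) + (1 - t) * (ln b - ln m) <= t * (a / m - 1) + (1 - t) * (b / m - 1).
  apply: lerD; apply: ler_wpM2l => //; lra.
have -> : t * (a / m - 1) + (1 - t) * (b / m - 1) = m / m - 1.
  rewrite /m; ring.
rewrite mulfV ?gt_eqF //. lra.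
Qed.

Lemma ln_sconc (a b t : R) : 0 < a -> 0 < b -> a != b -> 0 < t < 1 ->
  t * ln a + (1 - t) * ln b < ln (t * a + (1 - t) * b).
Proof.
move=> a0 b0 ab /andP[t0 t1].
have m0 : 0 < t * a + (1 - t) * b.
  apply: ltr_pwDl; first exact: mulr_gt0.
  by apply: mulr_ge0 => //; lra.
set m := t * a + (1 - t) * b in m0 *.
have am : a / m != 1.
  apply/negP => /eqP /divr1_eq am.
  have E : (1 - t) * (b - a) = 0.
    transitivity (m - a); first by rewrite /m; ring.
    by rewrite -am subrr.
  move/eqP: E; rewrite mulf_eq0 => /orP[|]; rewrite subr_eq0 => /eqP E.
    by move: t1; rewrite -E ltxx.
  by move: ab; rewrite E eqxx.
have ha := ln_lt_sub1 (divr_gt0 a0 m0) am; have hb := ln_le_sub1 (divr_gt0 b0 m0).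
rewrite !ln_div ?posrE // in ha hb.
have : t * (ln a - ln m) + (1 - t) * (ln b - ln m) < t * (a / m - 1) + (1 - t) * (b / m - 1).
  apply: ltr_leD; first by rewrite ltr_pM2l.
  apply: ler_wpM2l => //; lra.
have -> : t * (a / m - 1) + (1 - t) * (b / m - 1) = m / m - 1.
  rewrite /m; ring.
rewrite mulfV ?gt_eqF //. lra.
Qed.

End Conc.

Section Shape.
Variable R : realType.
Variables n1 n2 : nat.
Implicit Types (C : 'M[R]_(n1, n2)) (V : 'M[R]_(n1, n2)) (z w : 'cV[R]_n1 * 'cV[R]_n2).

Lemma dsum_le (F G : 'I_n1 -> 'I_n2 -> R) : (forall i j, F i j <= G i j) -> dsum F <= dsum G.
Proof. by move=> H; apply: ler_sum => i _; apply: ler_sum => j _. Qed.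

Lemma dsum_lt (F G : 'I_n1 -> 'I_n2 -> R) i0 j0 : (forall i j, F i j <= G i j) ->
  F i0 j0 < G i0 j0 -> dsum F < dsum G.
Proof.
move=> H H0; rewrite /dsum (bigD1 i0) //= [X in _ < X](bigD1 i0) //=.
apply: ltr_leD; last by apply: ler_sum => i _; apply: ler_sum => j _.
rewrite (bigD1 j0) //= [X in _ < X](bigD1 j0) //=.
by apply: ltr_leD => //; apply: ler_sum => j _.
Qed.

Definition Kc (eps : R) := (n1 * n2)%:R * eps * (1 - ln eps).

Lemma phiE (p1 : 'cV[R]_n1) (p2 : 'cV[R]_n2) eps C z :
  phi p1 p2 eps C z = \sum_i p1 i ord0 * z.1 i ord0 + \sum_j p2 j ord0 * z.2 j ord0
    + eps * dsum (fun i j => ln (aa C z i j)) + Kc eps.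
Proof. by rewrite /phi /betaC /Kc /aa /dsum mulrN opprK. Qed.

Lemma lin_comb n (p x x' : 'cV[R]_n) (t : R) :
  \sum_i p i ord0 * (t *: x + (1 - t) *: x') i ord0 =
  t * \sum_i p i ord0 * x i ord0 + (1 - t) * \sum_i p i ord0 * x' i ord0.
Proof.
rewrite !mulr_sumr -big_split /=; apply: eq_bigr => i _; rewrite !mxE /=; ring.
Qed.

Lemma aa_pcomb C t z w i j :
  aa C (pcomb t z w) i j = t * aa C z i j + (1 - t) * aa C w i j.
Proof. rewrite /aa /pcomb /= !mxE; ring. Qed.

Lemma phi_conc_gap (p1 : 'cV[R]_n1) (p2 : 'cV[R]_n2) eps C z w t :
  phi p1 p2 eps C (pcomb t z w) - (t * phi p1 p2 eps C z + (1 - t) * phi p1 p2 eps C w)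
  = eps * (dsum (fun i j => ln (t * aa C z i j + (1 - t) * aa C w i j))
     - dsum (fun i j => t * ln (aa C z i j) + (1 - t) * ln (aa C w i j))).
Proof.
rewrite !phiE /pcomb /= !lin_comb dsumD !dsumZ.
rewrite (_ : dsum (fun i j => ln (aa C (t *: z.1 + (1 - t) *: w.1, t *: z.2 + (1 - t) *: w.2) i j))
  = dsum (fun i j => ln (t * aa C z i j + (1 - t) * aa C w i j))); last first.
  by apply: eq_bigr => i _; apply: eq_bigr => j _; rewrite -aa_pcomb.
ring.
Qed.

Definition pshift w (t : R) := (w.1 + t *: const_mx 1, w.2 - t *: const_mx 1).

Lemma aa_pshift C w t i j : aa C (pshift w t) i j = aa C w i j.
Proof. rewrite /aa /pshift /= !mxE; ring. Qed.

Lemma sum_pshift w t : sumv (pshift w t).1 - sumv (pshift w t).2 =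
  sumv w.1 - sumv w.2 + (n1 + n2)%:R * t.
Proof.
rewrite /sumv /pshift /=.
under eq_bigr do rewrite !mxE mulr1.
under [X in _ - X = _]eq_bigr do rewrite !mxE mulr1.
rewrite big_split sumrB /= !sumr_const !card_ord natrD; ring.
Qed.

Lemma phi_pshift (p1 : 'cV[R]_n1) (p2 : 'cV[R]_n2) eps C w t :
  sumv p1 = sumv p2 -> phi p1 p2 eps C (pshift w t) = phi p1 p2 eps C w.
Proof.
move=> sp; rewrite !phiE.
rewrite (_ : dsum _ = dsum (fun i j => ln (aa C w i j))); last first.
  by apply: eq_bigr => i _; apply: eq_bigr => j _; rewrite aa_pshift.
rewrite /pshift /=.
under eq_bigr do rewrite !mxE mulr1 mulrDr.
under [X in _ + X + _ + _ = _]eq_bigr do rewrite !mxE mulr1 mulrBr.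
rewrite big_split sumrB /= -!mulr_suml.
move: sp; rewrite /sumv => ->; ring.
Qed.

Lemma Umat_pshift C eps w t : Umat C eps (pshift w t) = Umat C eps w.
Proof.
apply/matrixP => i j; rewrite !mxE.
congr (_ / _); ring.
Qed.

Lemma aa_eq_pshift C z w (i0 : 'I_n1) (j0 : 'I_n2) :
  (forall i j, aa C z i j = aa C w i j) -> z = pshift w (z.1 i0 ord0 - w.1 i0 ord0).
Proof.
case: z => x y; case: w => x' y' /= E; rewrite /pshift /=.
congr pair; apply/matrixP => i k; rewrite (ord1 k) !mxE mulr1.
  have := E i j0; have := E i0 j0; rewrite /aa /=; lra.
have := E i0 i; rewrite /aa /=; lra.
Qed.

End Shape.

Section Num.
Variable R : realType.

Lemma term_le_sum (I : finType) (F : I -> R) i : (forall k, 0 <= F k) -> F i <= \sum_k F k.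
Proof.
move=> H; rewrite (bigD1 i) //= lerDl; exact: sumr_ge0.
Qed.

Lemma fin_ub (I : finType) (f : I -> R) : exists M, forall i, f i <= M.
Proof.
exists (\sum_k `|f k|) => i; apply: le_trans (ler_norm _) _.
by apply: (@term_le_sum _ (fun k => `|f k|)) => k.
Qed.

Lemma fin_lb_pos (I : finType) (f : I -> R) : (forall i, 0 < f i) ->
  exists2 m, 0 < m & forall i, m <= f i.
Proof.
move=> H; have s0 : 0 <= \sum_k (f k)^-1 by apply: sumr_ge0 => k; rewrite invr_ge0 ltW.
exists (1 + \sum_k (f k)^-1)^-1; first by rewrite invr_gt0; lra.
move=> i; rewrite -(invrK (f i)) lef_pV2 ?posrE ?invr_gt0 //; last lra.
have Hi : forall k, 0 <= (f k)^-1 by move=> k; rewrite invr_ge0 ltW.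
have := @term_le_sum _ (fun k => (f k)^-1) i Hi => /=; lra.
Qed.

Lemma ln_le_half (w : R) : 0 < w -> ln w <= w / 2.
Proof.
move=> w0; have h1 := @ln_le_sub1 R (w / 2) (divr_gt0 w0 (ltr0Sn R 1)).
have h2 := @ln_le_sub1 R 2 (ltr0Sn R 1).
rewrite ln_div ?posrE // in h1; lra.
Qed.

Lemma hh_le_bounds (eps B s : R) : 0 < eps -> 0 < s -> hh eps s <= B ->
  eps * expR (- ((B + eps) / eps)) <= s /\ s <= 2 * (B + eps).
Proof.
move=> e0 s0 hB.
have hE : hh eps s = s - eps * ln (s / eps) - eps.
  by rewrite /hh ln_div ?posrE //; ring.
rewrite hE in hB.
have l1 := ln_le_half (divr_gt0 s0 e0).
have l2 : eps * ln (s / eps) <= s / 2.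
  have -> : s / 2 = eps * ((s / eps) / 2) by field; rewrite gt_eqF.
  by rewrite ler_pM2l.
split; last lra.
have l3 : - ((B + eps) / eps) <= ln (s / eps).
  rewrite lerNl ler_pdivlMr // mulrC; lra.
have : expR (- ((B + eps) / eps)) <= s / eps.
  by rewrite -[X in _ <= X]lnK ?posrE ?divr_gt0 // ler_expR.
by rewrite ler_pdivlMr // mulrC.
Qed.

Lemma lim_le (p S K al : R) : 0 < al -> 0 <= K ->
  (forall t, 0 < t <= al -> p <= S + t * K) -> p <= S.
Proof.
move=> a0 K0 H; rewrite leNgt; apply/negP => pS.
set t := Num.min al ((p - S) / (K + 1)).
have t0 : 0 < t by rewrite lt_min a0 divr_gt0 //; lra.
have ta : t <= al by rewrite ge_min lexx.
have tb : t <= (p - S) / (K + 1) by rewrite ge_min lexx orbT.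
rewrite ler_pdivlMr in tb; last lra.
have := H t; rewrite t0 ta => /(_ isT).
have : 0 <= t * K by apply: mulr_ge0 => //; exact: ltW.
nra.
Qed.

Lemma inv_step (eps a t al : R) : 0 < eps -> 0 < al -> 2 * al <= a -> 0 < t <= al ->
  eps / (a - t) <= eps / a + t * (eps / al ^+ 2).
Proof.
move=> e0 a0 aa /andP[t0 ta].
have ap : 0 < a by lra.
have qp : 0 < a - t by lra.
have -> : eps / (a - t) = eps / a + (eps * t) / (a * (a - t)).
  by field; rewrite ?gt_eqF //; apply/andP; split; rewrite gt_eqF.
rewrite lerD2l (_ : t * (eps / al ^+ 2) = (eps * t) / al ^+ 2); last by ring.
rewrite ler_pM2l ?mulr_gt0 //.
rewrite lef_pV2 ?posrE ?exprn_gt0 ?mulr_gt0 // expr2.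
apply: ler_pM; lra.
Qed.

Lemma inv_step2 (eps a t al : R) : 0 < eps -> 0 < al -> 2 * al <= a -> 0 < t ->
  eps / a - t * (eps / al ^+ 2) <= eps / (a + t).
Proof.
move=> e0 a0 aa t0.
have ap : 0 < a by lra.
have qp : 0 < a + t by lra.
have -> : eps / a = eps / (a + t) + (eps * t) / (a * (a + t)).
  by field; rewrite ?gt_eqF //; apply/andP; split; rewrite gt_eqF.
suff : (eps * t) / (a * (a + t)) <= t * (eps / al ^+ 2) by lra.
rewrite (_ : t * (eps / al ^+ 2) = (eps * t) / al ^+ 2); last by ring.
rewrite ler_pM2l ?mulr_gt0 //.
rewrite lef_pV2 ?posrE ?exprn_gt0 ?mulr_gt0 // expr2.
apply: ler_pM; lra.
Qed.

Lemma foc1 (J : finType) (a : J -> R) (p eps al : R) : 0 < eps -> 0 < al ->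
  (forall j, 2 * al <= a j) ->
  (forall t, - al <= t <= al -> t * p - t * \sum_j eps / (a j - t) <= 0) ->
  \sum_j eps / a j = p.
Proof.
move=> e0 a0 ha H.
set K := #|J|%:R * (eps / al ^+ 2).
have K0 : 0 <= K by apply: mulr_ge0 => //; apply: divr_ge0; [exact: ltW | exact: exprn_ge0 (ltW a0)].
have sumK : forall t : R, \sum_j (eps / a j + t * (eps / al ^+ 2)) = \sum_j eps / a j + t * K.
  move=> t; rewrite big_split /= sumr_const /K.
  by rewrite -mulr_natl; congr (_ + _); ring.
have sumK2 : forall t : R, \sum_j (eps / a j - t * (eps / al ^+ 2)) = \sum_j eps / a j - t * K.
  move=> t; rewrite big_split /= sumr_const /K.
  by rewrite -mulr_natl; congr (_ + _); ring.
apply/eqP; rewrite eq_le; apply/andP; split.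
- apply: (@lim_le _ _ K al) => // t /andP[t0 ta].
  have h : - al <= - t <= al by rewrite lerN2 ta /=; lra.
  have {h} := H (- t) h.
  have hs : \sum_j eps / a j - t * K <= \sum_j eps / (a j - - t).
    rewrite -sumK2; apply: ler_sum => j _; rewrite opprK; exact: inv_step2.
  move=> h2.
  have : \sum_j eps / (a j - - t) <= p.
    rewrite -(ler_pM2l t0) -subr_le0; move: h2; rewrite !mulNr opprK; lra.
  move=> h3; have := le_trans hs h3; lra.
- apply: (@lim_le _ _ K al) => // t /andP[t0 ta].
  have h : - al <= t <= al by rewrite ta andbT; lra.
  have {h} := H t h.
  have hs : \sum_j eps / (a j - t) <= \sum_j eps / a j + t * K.
    rewrite -sumK; apply: ler_sum => j _; apply: inv_step => //; by rewrite t0 ta.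
  move=> h2.
  have : p <= \sum_j eps / (a j - t).
    by rewrite -(ler_pM2l t0) -subr_le0.
  by move=> h3; exact: le_trans h3 hs.
Qed.

End Num.

Section Pert.
Variable R : realType.
Variables n1 n2 : nat.
Variable C : 'M[R]_(n1, n2).
Variable eps : R.
Variables (p1 : 'cV[R]_n1) (p2 : 'cV[R]_n2).
Implicit Types (z w : 'cV[R]_n1 * 'cV[R]_n2).

Lemma sum_only (I : finType) (G : I -> R) i : (forall k, k != i -> G k = 0) ->
  \sum_k G k = G i.
Proof. by move=> H; rewrite (bigD1 i) //= big1 ?addr0 // => k; apply: H. Qed.

Lemma ln_diff_ge (a a' : R) : 0 < a -> 0 < a' -> (a' - a) / a' <= ln a' - ln a.
Proof.
move=> a0 a'0; have := ln_le_sub1 (divr_gt0 a0 a'0).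
rewrite ln_div ?posrE // => h.
have -> : (a' - a) / a' = 1 - a / a' by field; rewrite gt_eqF.
lra.
Qed.

Lemma phi_lb z z' : 0 < eps -> Dhat C z -> Dhat C z' ->
  \sum_i p1 i ord0 * (z'.1 i ord0 - z.1 i ord0) + \sum_j p2 j ord0 * (z'.2 j ord0 - z.2 j ord0)
  + eps * dsum (fun i j => (aa C z' i j - aa C z i j) / aa C z' i j)
  <= phi p1 p2 eps C z' - phi p1 p2 eps C z.
Proof.
move=> e0 /DhatE Dz /DhatE Dz'.
have h : dsum (fun i j => (aa C z' i j - aa C z i j) / aa C z' i j)
   <= dsum (fun i j => ln (aa C z' i j)) - dsum (fun i j => ln (aa C z i j)).
  rewrite -dsumN -dsumD; apply: dsum_le => i j; exact: ln_diff_ge.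
have h2 := ler_wpM2l (ltW e0) h.
rewrite !phiE.
under eq_bigr do rewrite mulrBr.
under [X in _ + X + _ <= _]eq_bigr do rewrite mulrBr.
rewrite !sumrB. lra.
Qed.

Definition px z (i : 'I_n1) (t : R) := (z.1 + t *: delta_mx i ord0, z.2).
Definition py z (j : 'I_n2) (t : R) := (z.1, z.2 + t *: delta_mx j ord0).

Lemma aa_px z i t k j : aa C (px z i t) k j = aa C z k j - t * (k == i)%:R.
Proof. rewrite /aa /px /= !mxE eqxx andbT; ring. Qed.

Lemma aa_py z j t i l : aa C (py z j t) i l = aa C z i l - t * (l == j)%:R.
Proof. rewrite /aa /py /= !mxE eqxx andbT; ring. Qed.

Lemma phi_px_lb z i t : 0 < eps -> Dhat C z -> Dhat C (px z i t) ->
  t * p1 i ord0 - t * \sum_j eps / (aa C z i j - t)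
  <= phi p1 p2 eps C (px z i t) - phi p1 p2 eps C z.
Proof.
move=> e0 Dz Dz'; apply: le_trans (phi_lb e0 Dz Dz').
rewrite (@sum_only _ _ i); last by move=> k /negbTE ki; rewrite /px /= !mxE ki /=; ring.
rewrite [X in _ <= _ + X + _]big1; last by move=> j _; rewrite /px /= subrr mulr0.
rewrite /dsum (@sum_only _ _ i); last first.
  by move=> k /negbTE ki; apply: big1 => j _; rewrite !aa_px ki; rewrite mulr0 subr0 subrr mul0r.
rewrite mulr_sumr mulr_sumr -sumrN.
have e1 : (px z i t).1 i ord0 - z.1 i ord0 = t by rewrite /px /= !mxE eqxx /=; ring.
rewrite e1 addr0 [p1 i ord0 * t]mulrC lerD2l; apply: ler_sum => j _.
rewrite aa_px eqxx mulr1.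
have : 0 < aa C (px z i t) i j by move/DhatE: Dz'; apply.
rewrite aa_px eqxx mulr1 => hp.
rewrite le_eqVlt; apply/orP; left; apply/eqP; field; exact: lt0r_neq0.
Qed.

Lemma phi_py_lb z j t : 0 < eps -> Dhat C z -> Dhat C (py z j t) ->
  t * p2 j ord0 - t * \sum_i eps / (aa C z i j - t)
  <= phi p1 p2 eps C (py z j t) - phi p1 p2 eps C z.
Proof.
move=> e0 Dz Dz'; apply: le_trans (phi_lb e0 Dz Dz').
rewrite [X in _ <= X + _ + _]big1; last by move=> k _; rewrite /py /= subrr mulr0.
rewrite (@sum_only _ _ j); last by move=> k /negbTE ki; rewrite /py /= !mxE ki /=; ring.
have e1 : (py z j t).2 j ord0 - z.2 j ord0 = t by rewrite /py /= !mxE eqxx /=; ring.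
rewrite e1 add0r [p2 j ord0 * t]mulrC.
rewrite /dsum mulr_sumr mulr_sumr -sumrN lerD2l; apply: ler_sum => i _.
rewrite (@sum_only _ _ j); last first.
  by move=> k /negbTE ki; rewrite !aa_py ki mulr0 subr0 subrr mul0r.
rewrite aa_py eqxx mulr1.
have : 0 < aa C (py z j t) i j by move/DhatE: Dz'; apply.
rewrite aa_py eqxx mulr1 => hp.
rewrite le_eqVlt; apply/orP; left; apply/eqP; field; exact: lt0r_neq0.
Qed.

Lemma Umat_Voset z : 0 < eps -> Dhat C z ->
  (forall i, \sum_j eps / aa C z i j = p1 i ord0) ->
  (forall j, \sum_i eps / aa C z i j = p2 j ord0) ->
  Voset p1 p2 (Umat C eps z).
Proof.
move=> e0 /DhatE Dz hr hc.
have pos : forall i j, 0 < Umat C eps z i j.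
  by move=> i j; rewrite mxE; apply: divr_gt0 => //; exact: Dz.
split; last exact: pos.
split; first by move=> i j; exact: ltW.
split; apply/matrixP => i k; rewrite (ord1 k) !mxE.
  by rewrite -hr; apply: eq_bigr => j _; rewrite !mxE mulr1.
by rewrite -hc; apply: eq_bigr => j _; rewrite !mxE mulr1.
Qed.

Lemma mass_col z (j0 : 'I_n2) : sumv p1 = sumv p2 ->
  (forall i, \sum_j eps / aa C z i j = p1 i ord0) ->
  (forall j, j != j0 -> \sum_i eps / aa C z i j = p2 j ord0) ->
  \sum_i eps / aa C z i j0 = p2 j0 ord0.
Proof.
move=> sp hr hc.
have : \sum_j \sum_i eps / aa C z i j = \sum_j p2 j ord0.
  by rewrite exchange_big /=; under eq_bigr do rewrite hr; exact: sp.
rewrite (bigD1 j0) //= [X in _ = X](bigD1 j0) //=.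
rewrite (eq_bigr (fun j => p2 j ord0)); last by move=> j; exact: hc.
by move/addIr.
Qed.

End Pert.

Local Open Scope classical_set_scope.
Local Open Scope ring_scope.

Section Top.
Variable R : realType.

Lemma cont_sum N (I : finType) (f : I -> 'rV[R]_N -> R) x :
  (forall i, {for x, continuous (f i)}) ->
  {for x, continuous (fun v => \sum_i f i v)}.
Proof.
move=> H; rewrite -fct_sumE; apply: (big_ind (fun g => {for x, continuous g})) => //.
- exact: cst_continuous.
- by move=> g h cg ch; apply: continuousD.
Qed.

Lemma cont_coord N (k : 'I_N) x : {for x, continuous (fun v : 'rV[R]_N => v ord0 k)}.
Proof. exact: coord_continuous. Qed.

Lemma evt_abs N (A : set 'rV[R]_N) (F : 'rV[R]_N -> R) (Mb : R) v0 :
  A v0 -> (forall v, A v -> forall k, `|v ord0 k| <= Mb) -> closed A ->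
  (forall v, A v -> {for v, continuous F}) ->
  exists c, A c /\ forall v, A v -> F v <= F c.
Proof.
move=> Av0 Ab Acl Fc.
have cA : compact A.
  apply: (subclosed_compact Acl (@rV_compact _ N (fun=> `[(- Mb), Mb]%classic) _)).
    by move=> _; exact: segment_compact.
  move=> v Av k /=; rewrite in_itv /= -ler_norml; exact: Ab.
have [||c cA' cmax] := @EVT_max_rV R N F A _ cA.
- by exists v0.
- apply: continuous_in_subspaceT => v; rewrite inE => Av; exact: Fc.
exists c; split; first by rewrite inE in cA'.
by move=> v Av; apply: cmax; rewrite inE.
Qed.

Lemma closed_preim_le N (f : 'rV[R]_N -> R) (b : R) :
  continuous f -> closed [set v | f v <= b].
Proof.
move=> fc; apply: (@preimage_closed _ _ f [set y | y <= b]).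
  by move=> x _; apply: fc.
exact: closed_le.
Qed.

Lemma closed_preim_ge N (f : 'rV[R]_N -> R) (b : R) :
  continuous f -> closed [set v | b <= f v].
Proof.
move=> fc; apply: (@preimage_closed _ _ f [set y | b <= y]).
  by move=> x _; apply: fc.
exact: closed_ge.
Qed.

Lemma closed_preim_eq N (f : 'rV[R]_N -> R) (b : R) :
  continuous f -> closed [set v | f v = b].
Proof.
move=> fc; apply: (@preimage_closed _ _ f [set y | y = b]).
  by move=> x _; apply: fc.
exact: closed_eq.
Qed.

Lemma closed_forall N (I : Type) (P : I -> set 'rV[R]_N) :
  (forall i, closed (P i)) -> closed [set v | forall i, P i v].
Proof.
move=> H; have := @closed_bigI _ I setT P (fun i _ => H i).
by rewrite (_ : \bigcap_(i in setT) P i = [set v | forall i, P i v]) //;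
  apply/seteqP; split => v /= Hv i //; apply: Hv.
Qed.

End Top.

Section ContH.
Variable R : realType.
Variable T : topologicalType.
Lemma contB' (f g : T -> R) x : {for x, continuous f} -> {for x, continuous g} ->
  {for x, continuous (fun y => f y - g y)}.
Proof. move=> hf hg; exact: (continuousB hf hg). Qed.
Lemma contD' (f g : T -> R) x : {for x, continuous f} -> {for x, continuous g} ->
  {for x, continuous (fun y => f y + g y)}.
Proof. move=> hf hg; exact: (continuousD hf hg). Qed.
Lemma contM' (f g : T -> R) x : {for x, continuous f} -> {for x, continuous g} ->
  {for x, continuous (fun y => f y * g y)}.
Proof. move=> hf hg; exact: (continuousM hf hg). Qed.
Lemma contC' (k : R) x : {for x, continuous (fun _ : T => k)}.
Proof. exact: cst_continuous. Qed.
Lemma contln' (f : T -> R) x : 0 < f x -> {for x, continuous f} ->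
  {for x, continuous (fun y => ln (f y))}.
Proof. move=> fx hf; exact: (continuous_comp hf (continuous_ln fx)). Qed.
End ContH.

Section Exist.
Variable R : realType.
Variables n1 n2 : nat.
Variable C : 'M[R]_(n1, n2).

Definition zv (v : 'rV[R]_(n1 + n2)) : 'cV[R]_n1 * 'cV[R]_n2 :=
  (\col_i v ord0 (lshift n2 i), \col_j v ord0 (rshift n1 j)).
Definition vz (z : 'cV[R]_n1 * 'cV[R]_n2) : 'rV[R]_(n1 + n2) := row_mx z.1^T z.2^T.

Lemma zvK z : zv (vz z) = z.
Proof.
case: z => x y; rewrite /zv /vz /=; congr pair; apply/matrixP => i k;
  by rewrite (ord1 k) mxE ?row_mxEl ?row_mxEr mxE.
Qed.

Lemma aa_zv_cont i j : continuous (fun v => aa C (zv v) i j).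
Proof.
have -> : (fun v => aa C (zv v) i j) =
  (fun v : 'rV[R]_(n1 + n2) => C i j - v ord0 (lshift n2 i) - v ord0 (rshift n1 j)).
  by apply: funext => v; rewrite /aa !mxE.
move=> v.
have h1 := @contB' R _ (fun _ => C i j) (fun v : 'rV[R]_(n1+n2) => v ord0 (lshift n2 i)) v
  (@contC' _ _ _ v) (@coord_continuous R 1 (n1+n2) ord0 (lshift n2 i) v).
have h2 := @contB' R _ _ (fun v : 'rV[R]_(n1+n2) => v ord0 (rshift n1 j)) v h1
  (@coord_continuous R 1 (n1+n2) ord0 (rshift n1 j) v).
exact: h2.
Qed.

Lemma zv1_cont i v : {for v, continuous (fun v => (zv v).1 i ord0)}.
Proof.
have -> : (fun v => (zv v).1 i ord0) = (fun v : 'rV[R]_(n1 + n2) => v ord0 (lshift n2 i)).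
  by apply: funext => w; rewrite /zv !mxE.
exact: (@coord_continuous R 1 (n1+n2) ord0 (lshift n2 i) v).
Qed.

Lemma zv2_cont j v : {for v, continuous (fun v => (zv v).2 j ord0)}.
Proof.
have -> : (fun v => (zv v).2 j ord0) = (fun v : 'rV[R]_(n1 + n2) => v ord0 (rshift n1 j)).
  by apply: funext => w; rewrite /zv !mxE.
exact: (@coord_continuous R 1 (n1+n2) ord0 (rshift n1 j) v).
Qed.

Lemma F_cont (p1 : 'cV[R]_n1) (p2 : 'cV[R]_n2) eps v :
  (forall i j, 0 < aa C (zv v) i j) ->
  {for v, continuous (fun v => phi p1 p2 eps C (zv v))}.
Proof.
move=> pos.
have -> : (fun v => phi p1 p2 eps C (zv v)) = (fun v =>
   \sum_i p1 i ord0 * (zv v).1 i ord0 + \sum_j p2 j ord0 * (zv v).2 j ord0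
    + eps * (\sum_i \sum_j ln (aa C (zv v) i j)) + Kc n1 n2 eps).
  by apply: funext => w; rewrite phiE.
have hA := @cont_sum R _ _ (fun i v => p1 i ord0 * (zv v).1 i ord0) v
  (fun i => @contM' R _ _ _ v (@contC' R _ (p1 i ord0) v) (zv1_cont (i:=i) (v:=v))).
have hB := @cont_sum R _ _ (fun j v => p2 j ord0 * (zv v).2 j ord0) v
  (fun j => @contM' R _ _ _ v (@contC' R _ (p2 j ord0) v) (zv2_cont (j:=j) (v:=v))).
have hL := @cont_sum R _ _ (fun i v => \sum_j ln (aa C (zv v) i j)) v
  (fun i => @cont_sum R _ _ (fun j v => ln (aa C (zv v) i j)) v
     (fun j => @contln' R _ _ v (pos i j) (@aa_zv_cont i j v))).
have hL' := @contM' R _ _ _ v (@contC' R _ eps v) hL.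
have h1 := @contD' R _ _ _ v hA hB.
have h2 := @contD' R _ _ _ v h1 hL'.
have h3 := @contD' R _ _ _ v h2 (@contC' R _ (Kc n1 n2 eps) v).
exact: h3.
Qed.

End Exist.

Section Main.
Variable R : realType.
Variables n1 n2 : nat.
Variable C : 'M[R]_(n1, n2).
Variable eps : R.
Variables (p1 : 'cV[R]_n1) (p2 : 'cV[R]_n2).
Hypotheses (n1p : (0 < n1)%N) (n2p : (0 < n2)%N) (e0 : 0 < eps)
  (p1p : forall i, 0 < p1 i ord0) (p2p : forall j, 0 < p2 j ord0) (sp : sumv p1 = sumv p2).

Let i0 : 'I_n1 := Ordinal n1p.
Let j0 : 'I_n2 := Ordinal n2p.

Lemma S_gt0 : 0 < sumv p1.
Proof.
apply: lt_le_trans (p1p i0) _; rewrite /sumv.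
by apply: (@term_le_sum _ _ (fun i => p1 i ord0)) => k; exact: ltW.
Qed.

Definition V0 := \matrix_(i, j) (p1 i ord0 * p2 j ord0 / sumv p1).

Lemma V0_pos i j : 0 < V0 i j.
Proof. by rewrite mxE; apply: divr_gt0; [apply: mulr_gt0|exact: S_gt0]. Qed.

Lemma V0_Vo : Voset p1 p2 V0.
Proof.
split; last exact: V0_pos.
split; first by move=> i j; exact: ltW (V0_pos i j).
have Sn : sumv p1 != 0 by rewrite gt_eqF // S_gt0.
split; apply/matrixP => i k; rewrite (ord1 k) !mxE.
  under eq_bigr do rewrite !mxE mulr1.
  rewrite -mulr_suml -mulr_sumr -/(sumv p2) -sp; field; exact: Sn.
under eq_bigr do rewrite !mxE mulr1.
rewrite -mulr_suml.
under eq_bigr do rewrite mulrC.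
rewrite -mulr_sumr -/(sumv p1); field; exact: Sn.
Qed.

Lemma term_le_dsum (F : 'I_n1 -> 'I_n2 -> R) i j :
  (forall i j, 0 <= F i j) -> F i j <= dsum F.
Proof.
move=> H; apply: le_trans (@term_le_sum _ _ (fun j => F i j) j (H i)) _.
apply: (@term_le_sum _ _ (fun i => \sum_j F i j) i) => k.
exact: sumr_ge0.
Qed.

Lemma bound_main : exists al be : R, [/\ 0 < al, 4 * al <= be &
  forall z, Dhat C z -> phi p1 p2 eps C (const_mx (- (\sum_(ij : 'I_n1 * 'I_n2) `|C ij.1 ij.2| + 1)), 0) <= phi p1 p2 eps C z ->
  forall i j, 2 * al <= aa C z i j <= be / 2].
Proof.
set cb := \sum_(ij : 'I_n1 * 'I_n2) `|C ij.1 ij.2|.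
have hcb : forall i j, `|C i j| <= cb.
  move=> i j; apply: (@term_le_sum _ _ (fun ij : 'I_n1 * 'I_n2 => `|C ij.1 ij.2|) (i, j)).
  by move=> ?.
set z0 := (const_mx (- (cb + 1)) : 'cV[R]_n1, 0 : 'cV[R]_n2).
have Dz0 : Dhat C z0.
  apply/DhatE => i j; rewrite /aa /z0 /= !mxE.
  have := hcb i j; rewrite ler_norml => /andP[h1 h2]; lra.
have [m0 m0p hm0] := @fin_lb_pos R _ (fun ij : 'I_n1 * 'I_n2 => V0 ij.1 ij.2) (fun ij => V0_pos _ _).
have [M0 hM0] := @fin_ub R _ (fun ij : 'I_n1 * 'I_n2 => V0 ij.1 ij.2).
have m0M0 : m0 <= M0 := le_trans (hm0 (i0, j0)) (hM0 (i0, j0)).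
have M0p : 0 < M0 by lra.
set B := tau_obj C eps V0 - phi p1 p2 eps C z0.
have hB : B = dsum (fun i j => hh eps (V0 i j * aa C z0 i j)) by rewrite /B (gap e0 (proj1 V0_Vo) V0_pos Dz0).
have hB' : B = tau_obj C eps V0 - phi p1 p2 eps C z0 by [].
clearbody B.
have B0 : 0 <= B.
  rewrite hB; apply: sumr_ge0 => i _; apply: sumr_ge0 => j _; apply: hh_ge0 => //.
  apply: mulr_gt0; [exact: V0_pos | by move/DhatE: Dz0].
set lo := eps * expR (- ((B + eps) / eps)).
set hi := 2 * (B + eps).
have lo0 : 0 < lo by apply: mulr_gt0 => //; exact: expR_gt0.
have lohi : lo <= hi.
  have : expR (- ((B + eps) / eps)) <= 1.
    rewrite expR_le1 oppr_le0; apply: divr_ge0; last exact: ltW.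
    by apply: addr_ge0 => //; exact: ltW.
  move=> h; have : lo <= eps by rewrite /lo -[X in _ <= X]mulr1 ler_pM2l.
  rewrite /hi; lra.
exists (lo / (2 * M0)), (2 * hi / m0); split.
- by apply: divr_gt0 => //; lra.
- have i1 : (2 * M0)^-1 <= (2 * m0)^-1 by rewrite lef_pV2 ?posrE; lra.
  have : lo / (2 * M0) <= hi / (2 * m0).
    by apply: ler_pM => //; [exact: ltW | rewrite invr_ge0; lra].
  have -> : 2 * hi / m0 = 4 * (hi / (2 * m0)) by field; rewrite gt_eqF.
  lra.
move=> z Dz hz i j.
have hg := gap e0 (proj1 V0_Vo) V0_pos Dz.
have hle : hh eps (V0 i j * aa C z i j) <= B.
  have hpos : forall k l, 0 <= hh eps (V0 k l * aa C z k l).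
    move=> k l; apply: hh_ge0 => //; apply: mulr_gt0; [exact: V0_pos|by move/DhatE: Dz].
  apply: le_trans (@term_le_dsum (fun k l => hh eps (V0 k l * aa C z k l)) i j hpos) _.
  by rewrite -hg hB'; lra.
have az : 0 < aa C z i j by move/DhatE: Dz.
have vp := V0_pos i j.
have [h1 h2] := hh_le_bounds e0 (mulr_gt0 vp az) hle.
have vM := hM0 (i, j); have vm := hm0 (i, j); rewrite /= in vM vm.
have k1 : V0 i j * aa C z i j <= aa C z i j * M0 by rewrite mulrC ler_pM2l.
have k2 : aa C z i j * m0 <= V0 i j * aa C z i j by rewrite mulrC ler_pM2r.
apply/andP; split.
- rewrite mulrA ler_pdivrMr; last lra.
  have : lo <= aa C z i j * M0 by exact: le_trans h1 k1.
  lra.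
- rewrite ler_pdivlMr; last lra.
  rewrite ler_pdivlMr; last lra.
  have : aa C z i j * m0 <= hi by exact: le_trans k2 h2.
  lra.
Qed.

Lemma exists_opt : exists z, Dhat C z /\ Voset p1 p2 (Umat C eps z).
Proof.
have [al [be [al0 albe bnd]]] := bound_main.
set cb := \sum_(ij : 'I_n1 * 'I_n2) `|C ij.1 ij.2|.
have hcb : forall i j, `|C i j| <= cb.
  move=> i j; apply: (@term_le_sum _ _ (fun ij : 'I_n1 * 'I_n2 => `|C ij.1 ij.2|) (i, j)).
  by move=> ?.
have cb0 : 0 <= cb by apply: sumr_ge0 => ij _.
set z0 := (const_mx (- (cb + 1)) : 'cV[R]_n1, 0 : 'cV[R]_n2).
have Dz0 : Dhat C z0.
  apply/DhatE => i j; rewrite /aa /z0 /= !mxE.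
  have := hcb i j; rewrite ler_norml => /andP[h1 h2]; lra.
pose Aset := fun z : 'cV[R]_n1 * 'cV[R]_n2 => z.2 j0 ord0 = 0 /\ forall i j, al <= aa C z i j <= be.
have Aset_D : forall z, Aset z -> Dhat C z.
  move=> z [_ h]; apply/DhatE => i j; have := h i j; lra.
pose A : set 'rV[R]_(n1 + n2) := [set v | (zv v).2 j0 ord0 = 0] `&`
  ([set v | forall ij : 'I_n1 * 'I_n2, al <= aa C (zv v) ij.1 ij.2] `&`
   [set v | forall ij : 'I_n1 * 'I_n2, aa C (zv v) ij.1 ij.2 <= be]).
have AE : forall v, A v <-> Aset (zv v).
  move=> v; split.
    by move=> [h0 [h1 h2]]; split => // i j; rewrite (h1 (i, j)) (h2 (i, j)).
  move=> [h0 h]; split => //; split => ij; by case/andP: (h ij.1 ij.2).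
have Az0 : Aset z0.
  split; first by rewrite /z0 /= mxE.
  move=> i j; have := bnd z0 Dz0 (lexx _) i j; lra.
have Av0 : A (vz z0) by apply/AE; rewrite zvK.
have hbox : forall v, A v -> forall k, `|v ord0 k| <= 2 * cb + 2 * be.
  move=> v /AE [hy hb].
  have hx : forall i, `|(zv v).1 i ord0| <= cb + be.
    move=> i; have := hb i j0; have := hcb i j0; rewrite /aa hy !ler_norml.
    move=> /andP[c1 c2]; lra.
  have hyb : forall j, `|(zv v).2 j ord0| <= 2 * cb + 2 * be.
    move=> j; have := hb i0 j; have := hcb i0 j; have := hx i0; rewrite /aa !ler_norml.
    move=> /andP[c1 c2] /andP[c3 c4]; lra.
  move=> k; have := fintype.splitK k; case: (fintype.split k) => [i|j] /= <-.
    have := hx i; rewrite /zv mxE => h; lra.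
  by have := hyb j; rewrite /zv mxE.
have hcl : closed A.
  apply: closedI.
    apply: (@closed_preim_eq R _ (fun v => (zv v).2 j0 ord0)).
    by move=> v; exact: (zv2_cont (j:=j0) (v:=v)).
  apply: closedI.
    apply: (@closed_forall R _ _ (fun ij => [set v | al <= aa C (zv v) ij.1 ij.2])) => ij.
    apply: (@closed_preim_ge R _ (fun v => aa C (zv v) ij.1 ij.2)).
    exact: aa_zv_cont.
  apply: (@closed_forall R _ _ (fun ij => [set v | aa C (zv v) ij.1 ij.2 <= be])) => ij.
  apply: (@closed_preim_le R _ (fun v => aa C (zv v) ij.1 ij.2)).
  exact: aa_zv_cont.
have hct : forall v, A v -> {for v, continuous (fun v => phi p1 p2 eps C (zv v))}.
  move=> v /AE [_ hb]; apply: F_cont => i j; have := hb i j; lra.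
have [c [Ac cmax]] := evt_abs Av0 hbox hcl hct.
set zs := zv c.
have Azs : Aset zs by apply/AE.
have maxz : forall z, Aset z -> phi p1 p2 eps C z <= phi p1 p2 eps C zs.
  move=> z Az; have := cmax (vz z) ((AE _).2 (eq_ind_r Aset Az (zvK z))).
  by rewrite zvK.
have Dzs := Aset_D _ Azs.
have bz := bnd zs Dzs (maxz _ Az0).
have hrow : forall i, \sum_j eps / aa C zs i j = p1 i ord0.
  move=> i; apply: (@foc1 R _ (fun j => aa C zs i j) (p1 i ord0) eps al) => //.
    by move=> j; case/andP: (bz i j).
  move=> t /andP[t1 t2].
  have Ap : Aset (px zs i t).
    split; first exact: (proj1 Azs).
    move=> k j; rewrite aa_px; have := bz k j.
    by case: (k == i); rewrite ?mulr1 ?mulr0; lra.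
  have := phi_px_lb p1 p2 e0 Dzs (Aset_D _ Ap).
  have := maxz _ Ap; lra.
have hcol : forall j, j != j0 -> \sum_i eps / aa C zs i j = p2 j ord0.
  move=> j jj0; apply: (@foc1 R _ (fun i => aa C zs i j) (p2 j ord0) eps al) => //.
    by move=> i; case/andP: (bz i j).
  move=> t /andP[t1 t2].
  have Ap : Aset (py zs j t).
    split.
      have py2 : forall (z : 'cV[R]_n1 * 'cV[R]_n2) j t,
          (py z j t).2 j0 ord0 = z.2 j0 ord0 + t * (j0 == j)%:R.
        by move=> z j' t'; rewrite /py /= !mxE eqxx andbT.
      rewrite py2 eq_sym (negbTE jj0) mulr0 addr0; exact: (proj1 Azs).
    move=> k l; rewrite aa_py; have := bz k l.
    by case: (l == j); rewrite ?mulr1 ?mulr0; lra.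
  have := phi_py_lb p1 p2 e0 Dzs (Aset_D _ Ap).
  have := maxz _ Ap; lra.
have hcol0 := mass_col sp hrow hcol.
exists zs; split => //.
apply: Umat_Voset => // j.
by have [->|jj0] := eqVneq j j0; [exact: hcol0 | exact: hcol].
Qed.

End Main.

Local Close Scope classical_set_scope.
Local Open Scope ring_scope.

Section Final.
Variable R : realType.
Variables n1 n2 : nat.
Variable C : 'M[R]_(n1, n2).
Variable eps : R.
Variables (p1 : 'cV[R]_n1) (p2 : 'cV[R]_n2).
Hypothesis e0 : 0 < eps.
Implicit Types (z w : 'cV[R]_n1 * 'cV[R]_n2) (V : 'M[R]_(n1, n2)).

Lemma weak V z : Voset p1 p2 V -> Dhat C z -> phi p1 p2 eps C z <= tau_obj C eps V.
Proof.
move=> [Vs Vp] Dz; have := gap e0 Vs Vp Dz.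
have : 0 <= dsum (fun i j => hh eps (V i j * aa C z i j)).
  apply: sumr_ge0 => i _; apply: sumr_ge0 => j _; apply: hh_ge0 => //.
  by apply: mulr_gt0; [exact: Vp | move/DhatE: Dz].
lra.
Qed.

Lemma eq_case V z : Voset p1 p2 V -> Dhat C z ->
  tau_obj C eps V = phi p1 p2 eps C z -> V = Umat C eps z.
Proof.
move=> [Vs Vp] Dz E; have := gap e0 Vs Vp Dz; rewrite E subrr => /esym h0.
have pos : forall i j, 0 < V i j * aa C z i j.
  by move=> i j; apply: mulr_gt0; [exact: Vp | move/DhatE: Dz].
have nn : forall i j, 0 <= hh eps (V i j * aa C z i j) by move=> i j; exact: hh_ge0.
apply/matrixP => i j; rewrite mxE.
have : hh eps (V i j * aa C z i j) = 0.
  apply/eqP; rewrite eq_le nn andbT -h0.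
  apply: le_trans (@term_le_sum _ _ (fun j => hh eps (V i j * aa C z i j)) j (nn i)) _.
  exact: (@term_le_sum _ _ (fun i => \sum_j hh eps (V i j * aa C z i j)) i (fun k => sumr_ge0 _ (fun l _ => nn k l))).
move/(hh_eq0 e0 (pos i j)) => hv.
have az : aa C z i j != 0 by rewrite gt_eqF //; move/DhatE: Dz.
rewrite -hv -/(aa C z i j) mulfK //.
Qed.

Lemma Umat_self z : Dhat C z -> Voset p1 p2 (Umat C eps z) ->
  tau_obj C eps (Umat C eps z) = phi p1 p2 eps C z.
Proof.
move=> Dz [Vs Vp]; apply/eqP; rewrite -subr_eq0 (gap e0 Vs Vp Dz).
apply/eqP; apply: big1 => i _; apply: big1 => j _.
have az : aa C z i j != 0 by rewrite gt_eqF //; move/DhatE: Dz.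
rewrite mxE -/(aa C z i j) mulfVK // /hh; ring.
Qed.

End Final.

Lemma UmatE (R : realType) n1 n2 (C : 'M[R]_(n1, n2)) eps z i j :
  Umat C eps z i j = eps / aa C z i j.
Proof. by rewrite mxE. Qed.


Theorem theorem1p1 (R : realType) (n1 n2 : nat) (C : 'M[R]_(n1, n2)) (eps : R)
  (p1 : 'cV[R]_n1) (p2 : 'cV[R]_n2) :
  (0 < n1)%N -> (0 < n2)%N -> 0 < eps ->
  (forall i, 0 < p1 i ord0) -> (forall j, 0 < p2 j ord0) ->
  sumv p1 = sumv p2 ->
  concave_on (Dhat C) (phi p1 p2 eps C) /\
  strictly_concave_on (Dset C) (phi p1 p2 eps C) /\
  (exists tau : R,
     is_min (Voset p1 p2) (tau_obj C eps) tau /\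
     is_max (Dhat C) (phi p1 p2 eps C) tau /\
     is_max (Dset C) (phi p1 p2 eps C) tau) /\
  (exists u : 'cV[R]_n1 * 'cV[R]_n2,
     (forall z, (Dhat C z /\ forall w, Dhat C w ->
                   phi p1 p2 eps C w <= phi p1 p2 eps C z) <-> Lline u z) /\
     Dset C u /\ (forall z, Lline u z -> Dset C z -> z = u) /\
     (forall z, Dset C z -> (Voset p1 p2 (Umat C eps z) <-> z = u)) /\
     Voset p1 p2 (Umat C eps u) /\
     (forall V, Voset p1 p2 V ->
        tau_obj C eps (Umat C eps u) <= tau_obj C eps V) /\
     (forall V, Voset p1 p2 V ->
        tau_obj C eps V = tau_obj C eps (Umat C eps u) -> V = Umat C eps u)).
Proof.
move=> n1p n2p e0 p1p p2p sp.
pose i0 : 'I_n1 := Ordinal n1p.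
pose j0 : 'I_n2 := Ordinal n2p.
have Nn0 : (n1 + n2)%:R != 0 :> R by rewrite pnatr_eq0 -lt0n addn_gt0 n1p.
have conc : concave_on (Dhat C) (phi p1 p2 eps C).
  move=> z w /DhatE Dz /DhatE Dw t /andP[t0 t1].
  have := phi_conc_gap p1 p2 eps C z w t.
  have : dsum (fun i j => t * ln (aa C z i j) + (1 - t) * ln (aa C w i j)) <=
         dsum (fun i j => ln (t * aa C z i j + (1 - t) * aa C w i j)).
    apply: dsum_le => i j; apply: ln_conc => //; by rewrite t0.
  move=> h.
  have h3 : 0 <= eps * (dsum (fun i j => ln (t * aa C z i j + (1 - t) * aa C w i j)) -
         dsum (fun i j => t * ln (aa C z i j) + (1 - t) * ln (aa C w i j))).
    by apply: mulr_ge0; [exact: ltW | rewrite subr_ge0].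
  lra.
have shift0 : forall w : 'cV[R]_n1 * 'cV[R]_n2, pshift w 0 = w.
  by case=> x y; rewrite /pshift /= !scale0r addr0 subr0.
have sconc : strictly_concave_on (Dset C) (phi p1 p2 eps C).
  move=> z w [Dz' sz] [Dw' sw] zw t /andP[t0 t1].
  have Dz := (DhatE _ _).1 Dz'; have Dw := (DhatE _ _).1 Dw'.
  have [/existsP [[i j] /= hij]|] := boolP [exists ij : 'I_n1 * 'I_n2, aa C z ij.1 ij.2 != aa C w ij.1 ij.2].
    have := phi_conc_gap p1 p2 eps C z w t.
    have : dsum (fun i j => t * ln (aa C z i j) + (1 - t) * ln (aa C w i j)) <
           dsum (fun i j => ln (t * aa C z i j + (1 - t) * aa C w i j)).
      apply: (@dsum_lt _ _ _ _ _ i j).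
        move=> k l; apply: ln_conc => //; rewrite ltW //= ltW //.
      by apply: ln_sconc => //; rewrite t0.
    move=> h.
    have h3 : 0 < eps * (dsum (fun i j => ln (t * aa C z i j + (1 - t) * aa C w i j)) -
           dsum (fun i j => t * ln (aa C z i j) + (1 - t) * ln (aa C w i j))).
      by apply: mulr_gt0 => //; rewrite subr_gt0.
    lra.
  rewrite negb_exists => /forallP H.
  have E : forall i j, aa C z i j = aa C w i j.
    by move=> i j; have := H (i, j); rewrite negbK => /eqP.
  have zE := aa_eq_pshift i0 j0 E.
  exfalso; apply: zw.
  have := sum_pshift w (z.1 i0 ord0 - w.1 i0 ord0); rewrite -zE sz sw add0r => /esym.
  move/eqP; rewrite mulf_eq0 (negbTE Nn0) /= => /eqP d0.
  by rewrite zE d0 shift0.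
have [zs [Dzs Vzs]] := exists_opt C n1p n2p e0 p1p p2p sp.
pose t0 := (sumv zs.2 - sumv zs.1) / (n1 + n2)%:R.
pose u := pshift zs t0.
have Du' : Dhat C u by apply/DhatE => i j; rewrite aa_pshift; move/DhatE: Dzs; apply.
have Du : Dset C u.
  split => //; rewrite sum_pshift /t0 mulrC mulfVK //; ring.
pose U := Umat C eps u.
have VU : Voset p1 p2 U by rewrite /U /u Umat_pshift.
have phiu : tau_obj C eps U = phi p1 p2 eps C u by exact: Umat_self.
have online : forall z, Dhat C z -> phi p1 p2 eps C z = phi p1 p2 eps C u ->
    exists t, z = pshift u t.
  move=> z Dz hz.
  have := eq_case e0 VU Dz; rewrite phiu hz => /(_ erefl) UE.
  exists (z.1 i0 ord0 - u.1 i0 ord0); apply: (@aa_eq_pshift _ _ _ C _ _ i0 j0) => i j.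
  move/matrixP: UE => /(_ i j); rewrite /U !UmatE => h.
  apply: invr_inj; apply: (mulfI (lt0r_neq0 e0)); exact: (esym h).
have lineD : forall z, Lline u z -> Dset C z -> z = u.
  move=> z [t zE] [_ sz]; move: sz; rewrite zE.
  have -> : (u.1 + t *: const_mx 1, u.2 - t *: const_mx 1) = pshift u t by [].
  rewrite sum_pshift Du.2 add0r => /eqP; rewrite mulf_eq0 (negbTE Nn0) /= => /eqP ->.
  by rewrite shift0.
split => //; split => //; split.
  exists (tau_obj C eps U); split; last split.
  - split; first by exists U.
    by move=> V VV; rewrite phiu; exact: weak.
  - split; first by exists u => //.
    by move=> z Dz; exact: weak.
  - split; first by exists u => //.
    by move=> z [Dz _]; exact: weak.
exists u; split.
  move=> z; split.
    move=> [Dz hmax].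
    have h1 := hmax u Du'.
    have h2 := weak e0 VU Dz.
    have hz : phi p1 p2 eps C z = phi p1 p2 eps C u.
      by apply/eqP; rewrite eq_le h1 andbT -phiu.
    have [t zE] := online z Dz hz.
    by exists t.
  move=> [t zE].
  have zE' : z = pshift u t by [].
  split.
    by apply/DhatE => i j; rewrite zE' aa_pshift; move/DhatE: Du'; apply.
  move=> w Dw; rewrite zE' phi_pshift // -phiu; exact: weak.
split => //; split => //; split.
  move=> z Dz; split; last by move=> ->.
  move=> Vz.
  have e1 := Umat_self e0 Dz.1 Vz.
  have h1 := weak e0 VU Dz.1.
  have h2 := weak e0 Vz Du'.
  have hz : phi p1 p2 eps C z = phi p1 p2 eps C u.
    apply/eqP; rewrite eq_le -[X in _ <= X]phiu h1 /=; by rewrite -e1.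
  have [t zE] := online z Dz.1 hz.
  by apply: lineD => //; exists t.
split => //; split.
  by move=> V VV; rewrite phiu; exact: weak.
move=> V VV hV; apply: (eq_case e0 VV Du'); by rewrite hV phiu.
Qed.
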